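(* Let $\mathcal C\subseteq\mathbb R^{h\times p}$ be closed and convex with $W^\star\in\mathcal C$, and $\mathcal T$ its feasible ball. Let $U\in\mathcal C$ and suppose $\nabla\mathcal L(U)=(H_1+H_2+H_3)\,\mathrm{vec}(U-W^\star)$ where $H_1,H_2,H_3\in\mathbb R^{hp\times hp}$, $H_1$ symmetric with $0\preceq H_1\preceq\alpha I_{hp}$, $\|H_2+H_3\|\le\varepsilon$, and $\inf_{\mathbf v\in\mathcal T,\mathbf v\ne0}\mathbf v^TH_1\mathbf v/\|\mathbf v\|_2^2\ge\beta$, with $\beta\ge10\varepsilon$. Then $\hat U=\mathcal P_{\mathcal C}(U-\frac1\alpha\nabla\mathcal L(U))$ satisfies $\|\hat U-W^\star\|_F^2\le(1-\frac{\beta}{2\alpha})\|U-W^\star\|_F^2$.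
   Context: Matrices in $\mathbb R^{h\times p}$ are identified with vectors in $\mathbb R^{hp}$ (vec stacks rows). $\mathcal P_{\mathcal C}$ is Frobenius projection. Feasible ball: $\mathcal T=\mathcal B^{h\times p}\cap\mathrm{cl}\{\alpha U: W^\star+U\in\mathcal C,\alpha\ge0\}$ with $\mathcal B^{h\times p}$ the unit Frobenius ball. $\|\cdot\|$ is the spectral norm. *)

(* Defs.v *)
From Stdlib Require Import Reals.
From mathcomp Require Import all_boot.
Set Implicit Arguments. Unset Strict Implicit. Unset Printing Implicit Defensive.
Open Scope R_scope.

Definition Rvec (n : nat) := 'I_n -> R.
Definition Rsqmat (n : nat) := 'I_n -> 'I_n -> R.
Definition Rmat (h p : nat) := 'I_h -> 'I_p -> R.

Definition rsum n (F : 'I_n -> R) : R := \big[Rplus/R0]_(i in 'I_n) F i.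

Definition dotv n (u v : Rvec n) : R := rsum (fun i => u i * v i).
Definition norm2 n (v : Rvec n) : R := sqrt (dotv v v).
Definition vsub n (u v : Rvec n) : Rvec n := fun i => u i - v i.
Definition vscale n (a : R) (v : Rvec n) : Rvec n := fun i => a * v i.
Definition vzero n : Rvec n := fun _ => 0.

Definition mulmv n (A : Rsqmat n) (v : Rvec n) : Rvec n :=
  fun i => rsum (fun j => A i j * v j).
Definition madd n (A B : Rsqmat n) : Rsqmat n := fun i j => A i j + B i j.

Definition quad n (A : Rsqmat n) (v : Rvec n) : R := dotv v (mulmv A v).

Definition symm_mat n (A : Rsqmat n) : Prop := forall i j, A i j = A j i.
Definition psd n (A : Rsqmat n) : Prop := forall v : Rvec n, 0 <= quad A v.
Definition loewner_le_scalar n (A : Rsqmat n) (a : R) : Prop :=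
  forall v : Rvec n, quad A v <= a * dotv v v.

Definition spec_norm_le n (A : Rsqmat n) (e : R) : Prop :=
  forall v : Rvec n, norm2 v <= 1 -> norm2 (mulmv A v) <= e.

Definition msub h p (X Y : Rmat h p) : Rmat h p := fun i j => X i j - Y i j.
Definition madd_hp h p (X Y : Rmat h p) : Rmat h p := fun i j => X i j + Y i j.
Definition mscale h p (a : R) (X : Rmat h p) : Rmat h p := fun i j => a * X i j.
Definition frob h p (X : Rmat h p) : R :=
  sqrt (rsum (fun i => rsum (fun j => X i j ^ 2))).

(* vec: stacks rows, (vec X)_(i*p + j) = X i j *)
Lemma vec_row_lt h p (k : 'I_(h * p)) : (k %/ p < h)%N.
Proof.
  have Hp : (0 < p)%N.
    case: p k => [|p] k //; by case: k => m; rewrite muln0.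
  by rewrite ltn_divLR // mulnC ltn_ord.
Qed.
Lemma vec_col_lt h p (k : 'I_(h * p)) : (k %% p < p)%N.
Proof.
  have Hp : (0 < p)%N.
    case: p k => [|p] k //; by case: k => m; rewrite muln0.
  by rewrite ltn_pmod.
Qed.
Definition vec h p (X : Rmat h p) : Rvec (h * p) :=
  fun k => X (Ordinal (vec_row_lt k)) (Ordinal (vec_col_lt k)).

Definition closed_mset h p (C : Rmat h p -> Prop) : Prop :=
  forall X, (forall eps, 0 < eps -> exists Y, C Y /\ frob (msub X Y) < eps) -> C X.
Definition convex_mset h p (C : Rmat h p -> Prop) : Prop :=
  forall X Y t, C X -> C Y -> 0 <= t <= 1 ->
    C (madd_hp (mscale t X) (mscale (1 - t) Y)).

Definition closure_v n (S : Rvec n -> Prop) : Rvec n -> Prop :=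
  fun v => forall eps, 0 < eps -> exists y, S y /\ norm2 (vsub v y) < eps.

Definition feasible_ball h p (C : Rmat h p -> Prop) (Wstar : Rmat h p)
  : Rvec (h * p) -> Prop :=
  fun v => norm2 v <= 1 /\
    closure_v (fun y => exists (a : R) (V : Rmat h p),
                 0 <= a /\ C (madd_hp Wstar V) /\ y = vscale a (vec V)) v.

Definition is_proj h p (C : Rmat h p -> Prop) (X Y : Rmat h p) : Prop :=
  C Y /\ forall Z, C Z -> frob (msub X Y) <= frob (msub X Z).

(* Main.v *)
Require Import Defs.
From HB Require Import structures.
From Stdlib Require Import Reals.
From mathcomp Require Import all_boot.
From Stdlib Require Import Lra Psatz FunctionalExtensionality.
Open Scope R_scope.
Set Implicit Arguments. Unset Strict Implicit.

HB.instance Definition _ := Monoid.isComLaw.Build R R0 Rplus (fun a b c => esym (Rplus_assoc a b c)) Rplus_comm Rplus_0_l.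

Lemma rsum_add n (f g : 'I_n -> R) : rsum (fun i => f i + g i) = rsum f + rsum g.
Proof. by rewrite /rsum big_split. Qed.

Lemma rsum_scale n c (f : 'I_n -> R) : rsum (fun i => c * f i) = c * rsum f.
Proof.
rewrite /rsum; apply: (big_rec2 (fun y1 y2 => y1 = c * y2)); first by ring.
by move=> i y1 y2 _ ->; ring.
Qed.

Lemma rsum_ext n (f g : 'I_n -> R) : (forall i, f i = g i) -> rsum f = rsum g.
Proof. by move=> H; rewrite /rsum; apply: eq_bigr => i _. Qed.

Lemma rsum_ge0 n (f : 'I_n -> R) : (forall i, 0 <= f i) -> 0 <= rsum f.
Proof.
move=> H; rewrite /rsum; apply: (big_ind (fun x => 0 <= x)); first lra.
  move=> x y; lra.
by move=> i _; apply: H.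
Qed.

Lemma rsum_ge_term n (f : 'I_n -> R) k : (forall i, 0 <= f i) -> f k <= rsum f.
Proof.
move=> H; rewrite /rsum (bigD1 k) //=.
set S := \big[_/_]_(i | _) _.
have : 0 <= S.
  rewrite /S; apply: (big_ind (fun x => 0 <= x)); first lra.
    move=> x y; lra.
  by move=> i _; apply: H.
lra.
Qed.

Lemma rsum_exch n (F : 'I_n -> 'I_n -> R) :
  rsum (fun i => rsum (fun j => F i j)) = rsum (fun j => rsum (fun i => F i j)).
Proof. by rewrite /rsum exchange_big. Qed.

Lemma rsum_zero n : rsum (fun _ : 'I_n => 0) = 0.
Proof. by rewrite /rsum big1. Qed.

Lemma dotv_comm n (u v : Rvec n) : dotv u v = dotv v u.
Proof. by apply: rsum_ext => i; ring. Qed.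

Lemma dotv_subl n (u v w : Rvec n) : dotv (vsub u v) w = dotv u w - dotv v w.
Proof.
rewrite /dotv /vsub.
rewrite (@rsum_ext _ _ (fun i => u i * w i + (-1) * (v i * w i))); last by move=> i; ring.
by rewrite rsum_add rsum_scale; ring.
Qed.

Lemma dotv_scalel n c (u w : Rvec n) : dotv (vscale c u) w = c * dotv u w.
Proof.
rewrite /dotv /vscale -rsum_scale; apply: rsum_ext => i; ring.
Qed.

Lemma dotv_ge0 n (v : Rvec n) : 0 <= dotv v v.
Proof. apply: rsum_ge0 => i; nra. Qed.

Lemma norm2_sq n (v : Rvec n) : norm2 v ^ 2 = dotv v v.
Proof. by rewrite /norm2 pow2_sqrt //; apply: dotv_ge0. Qed.

Lemma norm2_ge0 n (v : Rvec n) : 0 <= norm2 v.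
Proof. apply: sqrt_pos. Qed.

Lemma norm2_scale n c (v : Rvec n) : norm2 (vscale c v) = Rabs c * norm2 v.
Proof.
rewrite /norm2 dotv_scalel dotv_comm dotv_scalel -Rmult_assoc sqrt_mult.
- by rewrite -(sqrt_Rsqr_abs c) /Rsqr.
- nra.
- apply: dotv_ge0.
Qed.

Lemma norm2_zero_pt n (v : Rvec n) : norm2 v = 0 -> forall i, v i = 0.
Proof.
move=> H i.
have H2 : dotv v v = 0 by rewrite -norm2_sq H; ring.
have : v i * v i <= dotv v v.
  apply: (@rsum_ge_term _ (fun i => v i * v i)) => j; nra.
nra.
Qed.

Lemma dotv_zero_r n (u v : Rvec n) : (forall i, v i = 0) -> dotv u v = 0.
Proof.
move=> H; rewrite /dotv (@rsum_ext _ _ (fun _ => 0)) ?rsum_zero // => i.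
rewrite H; ring.
Qed.

Lemma mulmv_zero n (A : Rsqmat n) (v : Rvec n) : (forall i, v i = 0) -> forall i, mulmv A v i = 0.
Proof. by move=> H i; apply: dotv_zero_r. Qed.

Lemma mulmv_madd n (A B : Rsqmat n) v i : mulmv (madd A B) v i = mulmv A v i + mulmv B v i.
Proof.
rewrite /mulmv /madd -rsum_add; apply: rsum_ext => j; ring.
Qed.

Lemma mulmv_scale n (A : Rsqmat n) c v : mulmv A (vscale c v) = vscale c (mulmv A v).
Proof.
apply: functional_extensionality => i.
rewrite /mulmv /vscale -rsum_scale; apply: rsum_ext => j; ring.
Qed.

Lemma mulmv_sub n (A : Rsqmat n) u v : mulmv A (vsub u v) = vsub (mulmv A u) (mulmv A v).
Proof.
apply: functional_extensionality => i.
rewrite /mulmv /vsub.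
rewrite (@rsum_ext _ _ (fun j => A i j * u j + (-1) * (A i j * v j))); last by move=> j; ring.
by rewrite rsum_add rsum_scale; ring.
Qed.

Lemma dotv_symm n (A : Rsqmat n) u v : symm_mat A -> dotv u (mulmv A v) = dotv v (mulmv A u).
Proof.
move=> HA; rewrite /dotv /mulmv.
rewrite (@rsum_ext _ _ (fun i => rsum (fun j => u i * A i j * v j))); last first.
  by move=> i; rewrite -rsum_scale; apply: rsum_ext => j; ring.
rewrite rsum_exch; apply: rsum_ext => j.
rewrite -rsum_scale; apply: rsum_ext => i; rewrite (HA i j); ring.
Qed.

Lemma dotv_subr n (u v w : Rvec n) : dotv w (vsub u v) = dotv w u - dotv w v.
Proof. by rewrite dotv_comm dotv_subl (dotv_comm u) (dotv_comm v). Qed.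

Lemma dotv_scaler n c (u w : Rvec n) : dotv w (vscale c u) = c * dotv w u.
Proof. by rewrite dotv_comm dotv_scalel dotv_comm. Qed.

Lemma dotv_expand n a b (x y : Rvec n) :
  dotv (vsub (vscale a x) (vscale b y)) (vsub (vscale a x) (vscale b y)) =
  a ^ 2 * dotv x x - 2 * a * b * dotv x y + b ^ 2 * dotv y y.
Proof.
rewrite !dotv_subl !dotv_subr !dotv_scalel !dotv_scaler (dotv_comm y x); ring.
Qed.

Lemma quad_expand n (A : Rsqmat n) a b (x y : Rvec n) : symm_mat A ->
  quad A (vsub (vscale a x) (vscale b y)) =
  a ^ 2 * quad A x - 2 * a * b * dotv x (mulmv A y) + b ^ 2 * quad A y.
Proof.
move=> HA; rewrite /quad mulmv_sub !mulmv_scale.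
rewrite !dotv_subl !dotv_subr !dotv_scalel !dotv_scaler (dotv_symm y x HA); ring.
Qed.

Lemma dotv_CS n (u v : Rvec n) : dotv u v <= norm2 u * norm2 v.
Proof.
have [Hu|Hu] := Req_dec (norm2 u) 0.
  rewrite dotv_comm dotv_zero_r; last exact: norm2_zero_pt.
  rewrite Hu; lra.
have [Hv|Hv] := Req_dec (norm2 v) 0.
  rewrite dotv_zero_r; last exact: norm2_zero_pt.
  rewrite Hv; lra.
set a := norm2 u; set b := norm2 v.
have ha : 0 < a by case: (Rle_lt_or_eq_dec _ _ (norm2_ge0 u)) => // E; exfalso; apply: Hu; rewrite -E.
have hb : 0 < b by case: (Rle_lt_or_eq_dec _ _ (norm2_ge0 v)) => // E; exfalso; apply: Hv; rewrite -E.
have H := dotv_ge0 (vsub (vscale b u) (vscale a v)).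
rewrite dotv_expand in H.
have Eu : dotv u u = a ^ 2 by rewrite norm2_sq.
have Ev : dotv v v = b ^ 2 by rewrite norm2_sq.
rewrite Eu Ev in H.
have : 2 * a * b * dotv u v <= 2 * a * b * (a * b) by nra.
move=> H2.
have hab : 0 < 2 * a * b by nra.
nra.
Qed.

Lemma gidx_lt h p (ij : 'I_h * 'I_p) : (ij.1 * p + ij.2 < h * p)%N.
Proof.
case: ij => [[i hi] [j hj]] /=.
apply: (@leq_trans ((i.+1) * p)); first by rewrite mulSn addnC ltn_add2r.
by rewrite leq_mul2r hi orbT.
Qed.

Definition gidx h p (ij : 'I_h * 'I_p) : 'I_(h * p) := Ordinal (gidx_lt ij).
Definition fidx h p (k : 'I_(h * p)) : 'I_h * 'I_p :=
  (Ordinal (vec_row_lt k), Ordinal (vec_col_lt k)).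

Lemma fidx_gidx h p (ij : 'I_h * 'I_p) : fidx (gidx ij) = ij.
Proof.
case: ij => [[i hi] [j hj]].
have Hp : (0 < p)%N by case: p j hj {hi} => //.
rewrite /fidx /gidx; congr pair; apply: val_inj => /=.
- by rewrite divnMDl // divn_small // addn0.
- by rewrite modnMDl modn_small.
Qed.

Lemma gidx_fidx h p (k : 'I_(h * p)) : gidx (fidx k) = k.
Proof. by apply: val_inj => /=; rewrite -divn_eq. Qed.

Lemma vec_gidx h p (X : Rmat h p) ij : vec X (gidx ij) = X ij.1 ij.2.
Proof.
rewrite /vec; have := fidx_gidx ij; rewrite /fidx.
by case: ij => [i j] /= [-> ->].
Qed.

Lemma frob_vec h p (X : Rmat h p) : frob X = norm2 (vec X).
Proof.
rewrite /frob /norm2 /dotv; congr sqrt.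
rewrite /rsum pair_big /=.
rewrite (reindex (@gidx h p)) /=; last first.
  by exists (@fidx h p) => x _; [apply: fidx_gidx | apply: gidx_fidx].
apply: eq_big => [ij|ij _] //; rewrite vec_gidx /=; ring.
Qed.

Lemma quad_scale n (A : Rsqmat n) c v : quad A (vscale c v) = c ^ 2 * quad A v.
Proof. rewrite /quad mulmv_scale dotv_scalel dotv_scaler; ring. Qed.

Lemma norm2_vzero n : norm2 (@vzero n) = 0.
Proof. by rewrite /norm2 dotv_zero_r ?sqrt_0. Qed.

Theorem mainTheorem9 (h p : nat) (C : Rmat h p -> Prop) (Wstar U G Uhat : Rmat h p)
  (H1 H2 H3 : Rsqmat (h * p)) (alpha beta eps : R) :
  closed_mset C -> convex_mset C -> C Wstar ->
  C U ->
  (* G = grad L(U) = (H1 + H2 + H3) vec(U - W* ) *)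
  (forall k, vec G k = mulmv (madd (madd H1 H2) H3) (vec (msub U Wstar)) k) ->
  0 < alpha ->
  symm_mat H1 -> psd H1 -> loewner_le_scalar H1 alpha ->
  spec_norm_le (madd H2 H3) eps ->
  (forall v, feasible_ball C Wstar v -> v <> @vzero _ ->
     beta <= quad H1 v / (norm2 v ^ 2)) ->
  10 * eps <= beta ->
  is_proj C (msub U (mscale (/ alpha) G)) Uhat ->
  frob (msub Uhat Wstar) ^ 2 <= (1 - beta / (2 * alpha)) * frob (msub U Wstar) ^ 2.
Proof.
move=> _ Hconv HW HU HG Ha Hsym _ Hloew Hspec Hball Hbe [HUh Hmin].
set X := msub U (mscale (/ alpha) G).
set d := vec (msub U Wstar).
set P := vec (msub Uhat Wstar).
set z := vec (msub X Wstar).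
set E := madd H2 H3.
set e := mulmv E d.
rewrite !frob_vec -/d -/P.
have He0 : 0 <= eps.
  have := Hspec (@vzero _); rewrite norm2_vzero => /(_ ltac:(lra)).
  have -> : mulmv E (@vzero _) = @vzero _.
    by apply: functional_extensionality => i; apply: mulmv_zero.
  by rewrite norm2_vzero.
have Hw : forall t, 0 <= t <= 1 -> 0 <= 2 * t * dotv (vsub z P) P + t ^ 2 * dotv P P.
  move=> t Ht.
  have HY := Hconv _ _ t HW HUh Ht.
  have := Hmin _ HY; rewrite !frob_vec -/X => Hle.
  have Hsq : norm2 (vec (msub X Uhat)) ^ 2 <=
             norm2 (vec (msub X (madd_hp (mscale t Wstar) (mscale (1 - t) Uhat)))) ^ 2.
    by have := norm2_ge0 (vec (msub X Uhat)); nra.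
  have E2 : vec (msub X (madd_hp (mscale t Wstar) (mscale (1 - t) Uhat))) =
            vsub (vscale 1 (vsub z P)) (vscale (- t) P).
    apply: functional_extensionality => k.
    rewrite /z /P /vec /vsub /vscale /msub /madd_hp /mscale; ring.
  rewrite E2 !norm2_sq dotv_expand in Hsq.
  rewrite (_ : vec (msub X Uhat) = vsub z P) in Hsq; last first.
    by apply: functional_extensionality => k; rewrite /z /P /vec /vsub /msub; ring.
  nra.
have Hstep1 : dotv P P <= dotv z P.
  have Hd : dotv (vsub z P) P = dotv z P - dotv P P by rewrite dotv_subl.
  have HPP := dotv_ge0 P.
  case: (Rle_or_lt 0 (dotv (vsub z P) P)) => Hc; first lra.
  exfalso.
  case: (Rle_or_lt (dotv P P) (- dotv (vsub z P) P)) => Hc2.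
    have := Hw 1 ltac:(lra); lra.
  have Hpos : 0 < dotv P P by lra.
  set t := - dotv (vsub z P) P / dotv P P.
  have Ht0 : 0 < t by rewrite /t; apply: Rdiv_lt_0_compat; lra.
  have Htt : t * dotv P P = - dotv (vsub z P) P by rewrite /t; field; lra.
  have Ht1 : t <= 1 by nra.
  have := Hw t ltac:(lra); nra.
have Hz : z = vsub d (vscale (/ alpha) (vsub (mulmv H1 d) (vscale (-1) e))).
  apply: functional_extensionality => k.
  have Hzk : z k = d k - / alpha * vec G k.
    by rewrite /z /d /X /vec /msub /mscale; ring.
  have Hek : e k = mulmv H2 d k + mulmv H3 d k by rewrite /e /E mulmv_madd.
  rewrite Hzk HG -/d mulmv_madd mulmv_madd /vsub /vscale Hek; ring.
have Hzp : dotv z P = dotv d P - / alpha * (dotv (mulmv H1 d) P + dotv e P).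
  rewrite Hz dotv_subl dotv_scalel dotv_subl dotv_scalel; ring.
rewrite !norm2_sq.
have [Ha0|Ha0] := Req_dec (norm2 d) 0.
  have Hd0 := norm2_zero_pt Ha0.
  have Hdd : dotv d d = 0 by rewrite -norm2_sq Ha0; ring.
  have Hdp : dotv d P = 0 by rewrite dotv_comm dotv_zero_r.
  have H1p : dotv (mulmv H1 d) P = 0.
    by rewrite dotv_comm dotv_zero_r // => i; apply: mulmv_zero.
  have Hep : dotv e P = 0.
    by rewrite dotv_comm dotv_zero_r // => i; apply: mulmv_zero.
  rewrite Hdd; rewrite Hzp Hdp H1p Hep in Hstep1; lra.
set a := norm2 d.
have ha : 0 < a.
  by case: (Rle_lt_or_eq_dec _ _ (norm2_ge0 d)) => // E0; exfalso; apply: Ha0; rewrite -E0.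
have Hb : forall V, C (madd_hp Wstar V) -> 0 < norm2 (vec V) ->
    beta * norm2 (vec V) ^ 2 <= quad H1 (vec V).
  move=> V HV hV.
  set y := vscale (/ norm2 (vec V)) (vec V).
  have Hy1 : norm2 y = 1.
    rewrite /y norm2_scale Rabs_right; first by field; lra.
    by apply: Rle_ge; apply: Rlt_le; apply: Rinv_0_lt_compat.
  have := Hball y.
  have Hfb : feasible_ball C Wstar y.
    split; first lra.
    move=> r hr; exists y; split.
      exists (/ norm2 (vec V)), V; split; last by split.
      by left; apply: Rinv_0_lt_compat.
    have -> : vsub y y = @vzero _.
      by apply: functional_extensionality => k; rewrite /vsub /vzero; ring.
    by rewrite norm2_vzero.
  have Hnz : y <> @vzero _.
    by move=> E0; move: Hy1; rewrite E0 norm2_vzero; lra.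
  move=> /(_ Hfb Hnz); rewrite Hy1 /y quad_scale.
  set q := quad H1 (vec V); set m := norm2 (vec V).
  move=> Hq.
  have hm : 0 < m by exact: hV.
  have Eq : (/ m) ^ 2 * q / 1 ^ 2 = q / m ^ 2 by field; lra.
  rewrite Eq in Hq; move: Hq => Hq2.
  have Hm2 : 0 < m ^ 2 by nra.
  have -> : q = q / m ^ 2 * m ^ 2 by field; lra.
  nra.
have HUd : C (madd_hp Wstar (msub U Wstar)).
  have -> : madd_hp Wstar (msub U Wstar) = U; last done.
  apply: functional_extensionality => i; apply: functional_extensionality => j.
  rewrite /madd_hp /msub; ring.
have Hqd := Hb _ HUd ha; rewrite -/d -/a in Hqd.
have Hqd2 := Hloew d; rewrite -norm2_sq -/a in Hqd2.
have Hba : beta <= alpha.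
  have Ha2 : 0 < a ^ 2 by nra.
  nra.
have Hdd : dotv d d = a ^ 2 by rewrite norm2_sq.
rewrite Hdd.
have [Hb0|Hb0] := Req_dec (norm2 P) 0.
  have : dotv P P = 0 by rewrite -norm2_sq Hb0; ring.
  move=> ->.
  have : 0 <= 1 - beta / (2 * alpha).
    have -> : 1 - beta / (2 * alpha) = (2 * alpha - beta) * / (2 * alpha) by field; lra.
    apply: Rmult_le_pos; first lra.
    by left; apply: Rinv_0_lt_compat; lra.
  nra.
set b := norm2 P.
have hb : 0 < b.
  by case: (Rle_lt_or_eq_dec _ _ (norm2_ge0 P)) => // E0; exfalso; apply: Hb0; rewrite -E0.
have HUhd : C (madd_hp Wstar (msub Uhat Wstar)).
  have -> : madd_hp Wstar (msub Uhat Wstar) = Uhat; last done.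
  apply: functional_extensionality => i; apply: functional_extensionality => j.
  rewrite /madd_hp /msub; ring.
have HqP := Hb _ HUhd hb; rewrite -/P -/b in HqP.
have HPP : dotv P P = b ^ 2 by rewrite norm2_sq.
rewrite HPP.
have Hcross : alpha * dotv P d - dotv P (mulmv H1 d) <= (alpha - beta) * a * b.
  have Hl := Hloew (vsub (vscale a P) (vscale b d)).
  rewrite quad_expand // dotv_expand HPP Hdd in Hl.
  have Hab : 0 < 2 * a * b by nra.
  nra.
have Hen : norm2 e <= eps * a.
  have := Hspec (vscale (/ a) d).
  rewrite norm2_scale Rabs_right; last by apply: Rle_ge; apply: Rlt_le; apply: Rinv_0_lt_compat.
  rewrite mulmv_scale norm2_scale Rabs_right; last by apply: Rle_ge; apply: Rlt_le; apply: Rinv_0_lt_compat.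
  rewrite -/a -/e.
  have -> : / a * a = 1 by field; lra.
  move=> /(_ ltac:(lra)) H.
  have -> : norm2 e = a * (/ a * norm2 e) by field; lra.
  nra.
have Hep : - dotv e P <= eps * a * b.
  have := dotv_CS (vscale (-1) e) P.
  rewrite dotv_scalel norm2_scale Rabs_Ropp Rabs_R1 -/b.
  have := norm2_ge0 e; nra.
rewrite Hzp in Hstep1.
rewrite (dotv_comm d P) (dotv_comm (mulmv H1 d) P) in Hstep1.
have Hmain : alpha * b ^ 2 <= (alpha - beta + eps) * a * b.
  have : alpha * b ^ 2 <= alpha * (dotv P d - / alpha * (dotv P (mulmv H1 d) + dotv e P)).
    by apply: Rmult_le_compat_l; lra.
  have -> : alpha * (dotv P d - / alpha * (dotv P (mulmv H1 d) + dotv e P)) =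
            alpha * dotv P d - dotv P (mulmv H1 d) - dotv e P by field; lra.
  lra.
have Hmain2 : alpha * b <= (alpha - beta + eps) * a by nra.
have Hfin : alpha ^ 2 * b ^ 2 <= (alpha ^ 2 - alpha * beta / 2) * a ^ 2.
  have Hc : 0 <= alpha - beta + eps by nra.
  have Hc2 : alpha - beta + eps <= alpha - 9 / 10 * beta by lra.
  have : (alpha * b) ^ 2 <= ((alpha - beta + eps) * a) ^ 2 by nra.
  have : (alpha - beta + eps) ^ 2 <= (alpha - 9 / 10 * beta) ^ 2 by nra.
  have : (alpha - 9 / 10 * beta) ^ 2 <= alpha ^ 2 - alpha * beta / 2 by nra.
  nra.
have -> : (1 - beta / (2 * alpha)) * a ^ 2 = (alpha ^ 2 - alpha * beta / 2) * a ^ 2 / alpha ^ 2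
  by field; lra.
have -> : b ^ 2 = alpha ^ 2 * b ^ 2 / alpha ^ 2 by field; lra.
rewrite /Rdiv; apply: Rmult_le_compat_r => //.
by left; apply: Rinv_0_lt_compat; nra.
Qed.
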